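(* Let $Z=A\cdot[0,1]^n\subseteq\mathbb{R}^d$ be a unimodular zonotope with matroid $M$. If $M$ has no coloops, then the element $x_0\otimes1$ (i.e. $x_0$) of $\mathcal{H}_Z$ lies in the interior ideal $\widetilde{\mathcal{H}_Z}$. In all cases $x_0^2\otimes1=x_0^2$ lies in $\widetilde{\mathcal{H}_Z}$. (Under the isomorphism $\mathcal{H}_Z\cong\mathbb{C}[z_S:S\subseteq[n]]/I_L^{\mathrm{SE}}$ these elements correspond to $z_\emptyset$ and $z_\emptyset^2$.)
   Context: A unimodular zonotope is $Z=A\cdot[0,1]^n\subseteq\mathbb{R}^d$ with $A$ a $d\times n$ integer matrix of rank $d$ whose maximal minors lie in $\{-1,0,1\}$; $M$ is the matroid of the columns of $A$; a coloop is an element in every basis. For finite $\mathcal{Z}\subseteq\mathbb{Z}^d\subseteq\mathbb{C}^d$, $\operatorname{gr}I(\mathcal{Z})$ is the ideal generated by top-degree components of polynomials vanishing on $\mathcal{Z}$; $I^\perp$ is the Macaulay inverse system. The harmonic algebra is $\mathcal{H}_Z=\bigoplus_{m\ge0}\mathbb{C}x_0^m\otimes(\operatorname{gr}I(mZ\cap\mathbb{Z}^d))^\perp$ and the interior ideal $\widetilde{\mathcal{H}_Z}=\bigoplus_{m\ge1}\mathbb{C}x_0^m\otimes(\operatorname{gr}I(\operatorname{int}(mZ)\cap\mathbb{Z}^d))^\perp$, both inside $\mathbb{C}[x_0,x_1,\dots,x_d]$. The ideal $I_L^{\mathrm{SE}}$ (for $L$ the complexified row space of $A$) is generated by $z_Sz_T-z_{S\cup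 T}z_{S\cap T}$ and the linear forms $\sum_{i\in C}\alpha_{C,i}z_{A'\cup\{i\}}$ for circuits $C$ with dependence $\sum_{i\in C}\alpha_{C,i}A_i=0$ and $A'\subseteq[n]\setminus C$. *)

(* Defs.v *)
From Stdlib Require Import Reals.
From HB Require Import structures.
From mathcomp Require Import all_boot all_order all_algebra.
From mathcomp Require Import mpoly.
From mathcomp.real_closed Require Import complex.
From mathcomp Require Import Rstruct.
Set Implicit Arguments. Unset Strict Implicit. Unset Printing Implicit Defensive.
Import Order.TTheory GRing.Theory Num.Theory.
Local Open Scope ring_scope.

Notation CC := (R[i]).

Section Zonotope.
Variables (d n : nat).

Definition unimodular (A : 'M[int]_(d, n)) : Prop :=
  \rank (map_mx (intr : int -> rat) A) = d /\
  forall f : 'I_d -> 'I_n, \det (colsub f A) \in [:: -1; 0; 1].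

(* Bases of the column matroid M: sets of d columns with nonzero minor
   (i.e. d linearly independent columns; rank A = d). *)
Definition col_basis (A : 'M[int]_(d, n)) (B : {set 'I_n}) : Prop :=
  exists f : 'I_d -> 'I_n, B = f @: setT /\ \det (colsub f A) != 0.

Definition coloop (A : 'M[int]_(d, n)) (j : 'I_n) : Prop :=
  forall B, col_basis A B -> j \in B.

(* v is a lattice point of the interior (in R^d) of
   m Z = { A lam | lam in [0,m]^n }. *)
Definition int_pt (A : 'M[int]_(d, n)) (m : nat) (v : 'cV[int]_d) : Prop :=
  exists2 eps : R, 0 < eps &
    forall y : 'cV[R]_d, (forall i, `|y i 0 - (v i 0)%:~R| < eps) ->
      exists lam : 'cV[R]_n,
        (forall j, 0 <= lam j 0 <= m%:R) /\ y = map_mx intr A *m lam.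

End Zonotope.

Section Polys.
Variable d : nat.
Local Notation P := {mpoly CC[d]}.

Definition vanish (S : 'cV[int]_d -> Prop) (p : P) : Prop :=
  forall v, S v -> p.@[fun k => ((v k 0)%:~R : CC)] = 0.

(* Top-degree homogeneous component of p (0 for p = 0). *)
Definition topc (p : P) : P :=
  \sum_(m <- msupp p | mdeg m == (msize p).-1) p@_m *: 'X_[m].

Definition grI (S : 'cV[int]_d -> Prop) (q : P) : Prop :=
  exists s : seq (P * P),
    (forall x, x \in s -> vanish S x.2) /\
    q = \sum_(x <- s) x.1 * topc x.2.

Definition diffop (g f : P) : P :=
  \sum_(m <- msupp g) g@_m *: mderivm m f.

Definition perp (J : P -> Prop) (f : P) : Prop :=
  forall g, J g -> diffop g f = 0.

Definition liftp (p : P) : {mpoly CC[d.+1]} :=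
  p \mPo [tuple 'X_(lift ord0 i) | i < d].

End Polys.

(* The interior ideal  ~H_Z = (+)_{m>=1} C x_0^m (x) (gr I(int(mZ) cap Z^d))^perp
   inside C[x_0, x_1, ..., x_d]. *)
Definition Htilde (d n : nat) (A : 'M[int]_(d, n)) (F : {mpoly CC[d.+1]}) : Prop :=
  exists (N : nat) (f : nat -> {mpoly CC[d]}),
    (forall m : nat, (0 < m)%N -> (m <= N)%N -> perp (grI (int_pt A m)) (f m)) /\
    F = \sum_(1 <= m < N.+1) 'X_ord0 ^+ m * liftp (f m).

(* Main.v *)
Require Import Defs.
From Stdlib Require Import Reals.
From HB Require Import structures.
From mathcomp Require Import all_boot all_order all_algebra.
From mathcomp Require Import mpoly.
From mathcomp.real_closed Require Import complex.
From mathcomp Require Import Rstruct.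
From mathcomp Require Import lra.
Import Order.TTheory GRing.Theory Num.Theory.
Local Open Scope ring_scope.
Lemma mderivm1 (d : nat) (m : 'X_{1..d}) : m != 0%MM ->
  mderivm m (1 : {mpoly CC[d]}) = 0.
Proof.
move=> hm; apply/mpolyP => m'; rewrite mcoeff_mderivm mcoeff1 mcoeff0.
case: eqP => [h|]; last by rewrite mul0rn.
exfalso; move: (congr1 mdeg h); rewrite mdegD mdeg0 => /eqP.
by rewrite addn_eq0 mdeg_eq0 (negbTE hm).
Qed.

Lemma topc0 (d : nat) (S : 'cV[int]_d -> Prop) (p : {mpoly CC[d]}) :
  (exists v, S v) -> vanish S p -> (topc p)@_0 = 0.
Proof.
move=> [v Sv] hp; rewrite /topc raddf_sum /=.
rewrite big_seq_cond big1 // => m /andP[ms /eqP hm].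
rewrite mcoeffZ mcoeffX.
case: eqP => [m0|]; last by rewrite mulr0.
exfalso; move: hm; rewrite m0 mdeg0 => /esym hs.
have hs1 : (msize p <= 1)%N by case: (msize p) hs => // [[]].
have := msize1_polyC hs1 => pc.
have := hp v Sv; rewrite pc mevalC => c0.
by move: ms; rewrite pc c0 msupp0.
Qed.

Lemma perp1 (d : nat) (S : 'cV[int]_d -> Prop) :
  (exists v, S v) -> perp (grI S) 1.
Proof.
move=> hS g [s [hs ->]]; rewrite /diffop.
have g0 : (\sum_(x <- s) x.1 * topc x.2)@_0 = 0.
  rewrite raddf_sum /= big_seq big1 // => x xs.
  by rewrite (rmorphM (mcoeff 0%MM)) /= (@topc0 _ _ _ hS (hs x xs) : _ = _) mulr0.
rewrite big_seq big1 // => m ms.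
rewrite mderivm1 ?scaler0 //; apply/eqP => m0.
by move: ms; rewrite mcoeff_msupp m0 g0 eqxx.
Qed.

Lemma gap_pos (I : finType) (F : I -> R) : (forall i, 0 < F i) ->
  exists2 g : R, 0 < g & forall i, g <= F i.
Proof.
move=> hF; exists (\big[Num.min/1]_i F i).
  by apply: lt_bigmin => //.
by move=> i; apply: bigmin_le.
Qed.

Lemma int_pt_crit (d n : nat) (A : 'M[int]_(d,n)) (m : nat) (f : 'I_d -> 'I_n)
  (lam : 'cV[R]_n) (v : 'cV[int]_d) :
  \det (colsub f A) != 0 ->
  (forall j, 0 <= lam j 0 <= m%:R) ->
  (forall k, 0 < lam (f k) 0 < m%:R) ->
  map_mx intr A *m lam = map_mx intr v ->
  int_pt A m v.
Proof.
move=> hdet hlam hlamf hAv.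
set Mr := map_mx (intr : int -> R) (colsub f A).
have uM : Mr \in unitmx.
  by rewrite unitmxE det_map_mx unitfE intr_eq0.
set Bi := invmx Mr.
set S := \sum_k \sum_l `|Bi k l|.
have S0 : 0 <= S by apply: sumr_ge0 => k _; apply: sumr_ge0 => l _.
have [g g0 hg] := @gap_pos _ (fun k => Num.min (lam (f k) 0) (m%:R - lam (f k) 0))
  (fun k => ltac:(rewrite lt_min; case/andP: (hlamf k) => h1 h2; rewrite h1 subr_gt0 h2 //)).
exists (g / (S + 1)); first by apply: divr_gt0 => //; lra.
move=> y hy.
set del := y - map_mx intr v.
set w := Bi *m del.
set P := colsub f (1%:M : 'M[R]_n).
exists (lam + P *m w); split; last first.
  rewrite mulmxDr hAv mulmxA mulmx_colsub mulmx1.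
  have -> : colsub f (map_mx intr A) = Mr by apply/matrixP => i j; rewrite !mxE.
  by rewrite /w mulmxA mulmxV // mul1mx /del addrC subrK.
move=> j.
have hw : forall k, `|w k 0| <= \sum_l `|Bi k l| * (g / (S + 1)).
  move=> k; rewrite !mxE; apply: le_trans (ler_norm_sum _ _ _) _.
  apply: ler_sum => l _; rewrite normrM ler_wpM2l //.
  by rewrite !mxE; apply: ltW; apply: hy.
have hPw : `|(P *m w) j 0| < g.
  rewrite mxE; apply: (le_lt_trans (ler_norm_sum _ _ _)).
  apply: (le_lt_trans (_ : _ <= S * (g / (S + 1)))).
    rewrite /S mulr_suml; apply: ler_sum => k _.
    rewrite normrM mxE; apply: (le_trans (_ : _ <= 1 * `|w k 0|)).
      rewrite ler_wpM2r // !mxE; case: (j == f k); rewrite ?normr1 ?normr0 ?ler01 //.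
    rewrite mul1r; apply: (le_trans (hw k)); rewrite -mulr_suml //.
  rewrite mulrA ltr_pdivrMr; last by lra.
  nra.
rewrite mxE.
case: (boolP [exists k, f k == j]) => [/existsP [k /eqP ej]|nj].
  have := hg k; rewrite le_min => /andP [h1 h2].
  move: hPw; rewrite ltr_norml => /andP [h3 h4].
  rewrite -ej in h3 h4 *.
  by apply/andP; split; lra.
have -> : (P *m w) j 0 = 0.
  rewrite mxE big1 // => k _; rewrite !mxE.
  case: eqP => [ej|]; last by rewrite mul0r.
  by move: nj; rewrite negb_exists => /forallP /(_ k); rewrite ej eqxx.
by rewrite addr0; apply: hlam.
Qed.

Lemma exists_basis (d n : nat) (A : 'M[int]_(d,n)) : unimodular A ->
  exists f : 'I_d -> 'I_n, \det (colsub f A) != 0.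
Proof.
move=> [rk _].
set Aq := map_mx (intr : int -> rat) A in rk.
have fA : row_full Aq^T by rewrite /row_full mxrank_tr rk.
exists (fullrankfun fA).
have := fullrowsub_unit fA; rewrite unitmxE unitfE.
have -> : rowsub (fullrankfun fA) Aq^T = (map_mx (intr : int -> rat) (colsub (fullrankfun fA) A))^T.
  by apply/matrixP => i j; rewrite !mxE.
by rewrite det_tr det_map_mx intr_eq0.
Qed.

Lemma case2 (d n : nat) (A : 'M[int]_(d,n)) : unimodular A ->
  exists v, int_pt A 2 v.
Proof.
move=> /exists_basis [f hf].
exists (A *m const_mx 1); apply: (@int_pt_crit _ _ _ _ f (const_mx 1)) => //.
- by move=> j; rewrite mxE; apply/andP; split => //; lra.
- by move=> j; rewrite mxE; apply/andP; split => //; lra.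
- by rewrite map_mxM map_const_mx rmorph1.
Qed.

Lemma small_sum (n : nat) (c : 'I_n -> R) (T : pred 'I_n) (j1 : 'I_n) (dl : R) :
  (forall j, c j != 0 -> 1 <= `|c j|) -> T j1 -> c j1 != 0 ->
  0 < dl -> dl * (\sum_j `|c j|) < 1 -> dl <= 1 ->
  0 < `|\sum_j (if T j then c j * dl ^+ j.+1 else 0)| < 1.
Proof.
move=> hc Tj1 cj1 dl0 hdl dl1.
set Sg := \sum_j `|c j|.
have Sg0 : 0 <= Sg by apply: sumr_ge0.
have hX : forall k, 0 < dl ^+ k by move=> k; apply: exprn_gt0.
apply/andP; split; last first.
  apply: (le_lt_trans (ler_norm_sum _ _ _)).
  apply: (le_lt_trans (_ : _ <= Sg * dl)); last by rewrite mulrC.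
  rewrite /Sg mulr_suml; apply: ler_sum => j _.
  case: ifP => _; last by rewrite normr0 mulr_ge0 // ltW.
  rewrite normrM (ger0_norm (ltW (hX j.+1))); apply: (ler_wpM2l (normr_ge0 _)).
  rewrite exprS; apply: ler_piMr; [exact: ltW | apply: exprn_ile1 => //; exact: ltW].
case: (@arg_minnP _ j1 (fun j => T j && (c j != 0)) (fun j => val j)).
  by rewrite Tj1 cj1.
move=> j0 /andP [Tj0 cj0] hmin.
rewrite (bigD1 j0) //= Tj0.
set Rs := \sum_(j | j != j0) _.
have hR : `|Rs| <= Sg * (dl * dl ^+ j0.+1).
  apply: (le_trans (ler_norm_sum _ _ _)).
  apply: (le_trans (_ : _ <= \sum_(j | j != j0) `|c j| * (dl * dl ^+ j0.+1))).
    apply: ler_sum => j hj.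
    case: ifP => Tj; last by rewrite normr0 mulr_ge0 // ltW // mulr_gt0.
    case: (eqVneq (c j) 0) => [->|cj]; first by rewrite mul0r normr0 mulr_ge0 // ltW // mulr_gt0.
    have := hmin j; rewrite Tj cj => /(_ isT) hj0.
    have hlt : (j0 < j)%N by rewrite ltn_neqAle hj0 andbT; apply/eqP => /val_inj /eqP; rewrite eq_sym (negbTE hj).
    rewrite normrM (ger0_norm (ltW (hX j.+1))); apply: (ler_wpM2l (normr_ge0 _)); rewrite -exprS.
    by apply: ler_wiXn2l => //; apply: ltW.
  rewrite /Sg mulr_suml [X in _ <= X](bigD1 j0) //= lerDr.
  by apply: mulr_ge0 => //; apply: ltW; apply: mulr_gt0.
have := lerB_normD (c j0 * dl ^+ j0.+1) Rs.
rewrite normrM (ger0_norm (ltW (hX j0.+1))).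
have := hc _ cj0; have := hX j0.+1.
set X := dl ^+ j0.+1; set cc := `|c j0|; set r := `|Rs| in hR *.
move=> hX0 hcc h.
rewrite -/X in hR.
have h1 : Sg * (dl * X) < X by rewrite mulrA (mulrC Sg) -[X in _ < X](mul1r X) ltr_pM2r.
have h2 : X <= cc * X by rewrite -[X in X <= _](mul1r X) ler_pM2r.
lra.
Qed.

Lemma case1 (d n : nat) (A : 'M[int]_(d,n)) : unimodular A ->
  (forall j, ~ coloop A j) -> exists v, int_pt A 1 v.
Proof.
move=> hu hnc; have [f hf] := @exists_basis _ _ _ hu; case: hu => _ hmin.
set M := colsub f A.
have he : \det M * \det M = 1.
  move: (hmin f) hf; rewrite -/M !inE; case/or3P => /eqP -> //.
set Minv := \det M *: \adj M.
have hMiM : Minv *m M = 1%:M by rewrite -scalemxAl mul_adj_mx scale_scalar_mx he.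
have hMMi : M *m Minv = 1%:M by rewrite -scalemxAr mul_mx_adj scale_scalar_mx he.
set C := Minv *m A.
have hMC : M *m C = A by rewrite /C mulmxA hMMi mul1mx.
have hCf : forall i k, C i (f k) = (i == k)%:R.
  move=> i k; have : colsub f C = 1%:M by rewrite /C -mulmx_colsub hMiM.
  by move/matrixP => /(_ i k); rewrite !mxE.
clearbody C.
have finj : injective f.
  move=> k k' e; apply/eqP; have := hCf k k'; rewrite -e hCf eqxx.
  by case: (k == k') => //= /eqP; rewrite eq_sym oner_eq0.
have hJ : forall i, exists j, ~~ [exists k, f k == j] && (C i j != 0).
  move=> i.
  case: (boolP [exists j, ~~ [exists k, f k == j] && (C i j != 0)]) => [/existsP //|hno].
  exfalso; apply: (hnc (f i)) => B [g [-> hg]].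
  case: (boolP (f i \in g @: setT)) => // hni; exfalso.
  have h0 : \det (colsub g C) = 0.
    rewrite (expand_det_row _ i) big1 // => k _; rewrite !mxE.
    suff -> : C i (g k) = 0 by rewrite mul0r.
    case: (boolP [exists k', f k' == g k]) => [/existsP [k' /eqP ek']|ni].
      rewrite -ek' hCf; case: eqP => // eik'; exfalso.
      have : f i \in g @: setT by apply/imsetP; exists k => //; rewrite -ek' eik'.
      by rewrite (negbTE hni).
    move: hno; rewrite negb_exists => /forallP /(_ (g k)).
    by rewrite ni /= negbK => /eqP.
  by move: hg; rewrite -hMC -mulmx_colsub det_mulmx h0 mulr0 eqxx.
set cR := map_mx (intr : int -> R) C.
set K := \sum_i \sum_j `|cR i j|.
have K0 : 0 <= K by apply: sumr_ge0 => i _; apply: sumr_ge0 => *; exact: normr_ge0.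
set dl : R := (K + 2)^-1.
have dl0 : 0 < dl by rewrite invr_gt0; lra.
have dl1 : dl <= 1 by rewrite /dl invf_le1; lra.
have dlK : dl * K < 1.
  by rewrite mulrC ltr_pdivrMr; lra.
have hrow : forall i, \sum_j `|cR i j| <= K.
  move=> i; rewrite /K (bigD1 i) //= lerDl; apply: sumr_ge0 => i' _; apply: sumr_ge0 => *; exact: normr_ge0.
set t : 'cV[R]_n := \col_j (if [exists k, f k == j] then 0 else dl ^+ j.+1).
set s := cR *m t.
have hs : forall i, 0 < `|s i 0| < 1.
  move=> i; have [j1 /andP [nj1 cj1]] := hJ i.
  have -> : s i 0 = \sum_j (if ~~ [exists k, f k == j] then cR i j * dl ^+ j.+1 else 0).
    rewrite mxE; apply: eq_bigr => j _; rewrite !mxE.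
    by case: [exists k, f k == j] => /=; rewrite ?mulr0.
  apply: (@small_sum _ (fun j => cR i j) (fun j => ~~ [exists k, f k == j]) j1) => //.
  - move=> j; rewrite mxE intr_eq0 => h.
    by rewrite -intr_norm ler1z -gtz0_ge1 normr_gt0.
  - by rewrite mxE intr_eq0.
  - apply: le_lt_trans dlK; apply: ler_wpM2l; [exact: ltW | exact: hrow].
set u : 'cV[R]_d := \col_i (if 0 < s i 0 then 1 - s i 0 else - s i 0).
have hu : forall i, 0 < u i 0 < 1.
  move=> i; have := hs i; rewrite [u i 0]mxE.
  case: (ltrP 0 (s i 0)) => h; [rewrite gtr0_norm // | rewrite ler0_norm //];
    move=> /andP [h1 h2]; apply/andP; split; lra.
set P := colsub f (1%:M : 'M[R]_n).
have hP : forall j k, P j k = (j == f k)%:R by move=> j k; rewrite !mxE.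
clearbody P.
have hPf : forall k, (P *m u) (f k) 0 = u k 0.
  move=> k; rewrite mxE (bigD1 k) //= hP eqxx mul1r big1 ?addr0 // => k' hk'.
  rewrite hP; case: eqP => [/finj ekk|]; last by rewrite mul0r.
  by move: hk'; rewrite ekk eqxx.
have hPn : forall j, ~~ [exists k, f k == j] -> (P *m u) j 0 = 0.
  move=> j nj; rewrite mxE big1 // => k _; rewrite hP.
  case: eqP => [ej|]; last by rewrite mul0r.
  by move: nj; rewrite negb_exists => /forallP /(_ k); rewrite ej eqxx.
set lam := t + P *m u.
have htf : forall k, t (f k) 0 = 0.
  move=> k; rewrite mxE; case: ifP => // /negbT; rewrite negb_exists => /forallP /(_ k).
  by rewrite eqxx.
set z : 'cV[int]_d := \col_i (if 0 < s i 0 then 1 else 0).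
exists (M *m z); apply: (@int_pt_crit _ _ _ _ f lam) => //.
- move=> j; case: (boolP [exists k, f k == j]) => [/existsP [k /eqP <-]| nj].
    rewrite mxE htf hPf add0r; have := hu k; move=> /andP [h1 h2].
    by apply/andP; split; lra.
  rewrite mxE hPn // addr0 mxE (negbTE nj).
  have := exprn_gt0 j.+1 dl0; have := @exprn_ile1 _ j.+1 dl (ltW dl0) dl1.
  by move=> h1 h2; apply/andP; split; lra.
- by move=> k; rewrite mxE htf hPf add0r; apply: hu.
- rewrite -hMC map_mxM -mulmxA map_mxM; congr (_ *m _).
  rewrite /lam mulmxDr mulmxA.
  have -> : cR *m P = 1%:M.
    apply/matrixP => i k; rewrite !mxE (bigD1 (f k)) //= hP eqxx mulr1 big1 ?addr0.
      by rewrite /cR mxE hCf; case: (i == k).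
    by move=> j /negbTE hj; rewrite hP hj mulr0.
  rewrite mul1mx; apply/matrixP => i j; rewrite ord1 !mxE.
  case: ifP => _; rewrite ?rmorph1 ?rmorph0; lra.
Qed.

Theorem lemma6p3 (d n : nat) (A : 'M[int]_(d, n)) :
  unimodular A ->
  ((forall j : 'I_n, ~ coloop A j) -> Htilde A ('X_ord0 : {mpoly CC[d.+1]})) /\
  Htilde A (('X_ord0 : {mpoly CC[d.+1]}) ^+ 2).
Proof.
move=> hu; split.
  move=> hnc; have [v hv] := @case1 _ _ _ hu hnc.
  exists 1%N, (fun _ => 1); split.
    move=> m m0 m1; have -> : m = 1%N by apply/eqP; rewrite eqn_leq m1 m0.
    by apply: perp1; exists v.
  by rewrite big_nat1 expr1 /liftp rmorph1 mulr1.
have [v hv] := @case2 _ _ _ hu.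
exists 2%N, (fun m => if m == 2%N then 1 else 0); split.
  move=> m m0 m2; case: eqP => [->|_].
    by apply: perp1; exists v.
  by move=> g _; rewrite /diffop big1 // => mm _; rewrite raddf0 scaler0.
rewrite big_ltn // big_nat1 /= /liftp rmorph0 rmorph1 mulr0 mulr1 add0r //.
Qed.
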